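(* Let $f:(\mathbb R^2,q)\to(\mathbb R^3,p)$ be a smooth germ with a corank 1 singularity at $q$ whose curvature parabola $\Delta_p$ is a non-degenerate parabola or a half-line (equivalently, $j^2f$ is $\mathcal A^2$-equivalent to $(x,y^2,xy)$ or $(x,y^2,0)$). If $(u,v)$ is a coordinate system with $f_u(q)\ne0$ and $f_v(q)=0$, then $$v_a=\frac{(f_u\times f_{vv})\times f_u}{|(f_u\times f_{vv})\times f_u|}(q),$$ and if moreover $|f_u(q)|=|f_{vv}(q)|=1$ and $\langle f_u(q),f_{vv}(q)\rangle=0$, then $v_a=f_{vv}(q)$.
   Context: $T_pM=\operatorname{im}df_q$, $N_pM$ its orthogonal complement with a fixed orientation. First fundamental form $I(X,Y)=\langle df_qX,df_qY\rangle$; second fundamental form $II$: the symmetric bilinear map $T_q\mathbb R^2\times T_q\mathbb R^2\to N_pM$ with $II(\partial_u,\partial_u)=f_{uu}(q)^\perp$, $II(\partial_u,\partial_v)=f_{uv}(q)^\perp$, $II(\partial_v,\partial_v)=f_{vv}(q)^\perp$ ($\perp$ = orthogonal projection to $N_pM$). Curvature parabola $\Delta_p=\{II(X,X): I(X,X)=1\}\subset N_pM$. Axial vector $v_a$: if $\Delta_p$ is a non-degenerate parabola, the unit vector along its axis of symmetry pointing to its interior; if $\Delta_p$ is a half-line, the unit vector in the direction in which the half-line extends. *)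

(* Defs.v *)
From HB Require Import structures.
From mathcomp Require Import all_boot all_order all_algebra.
From mathcomp Require Import all_classical all_reals all_analysis.
Set Implicit Arguments. Unset Strict Implicit. Unset Printing Implicit Defensive.
Import Order.TTheory GRing.Theory Num.Theory.
Import numFieldNormedType.Exports.
Local Open Scope classical_set_scope.
Local Open Scope ring_scope.

Section Defs.
Variable R : realType.
Local Notation V2 := 'rV[R]_2.
Local Notation V3 := 'rV[R]_3.

(** Euclidean inner product, norm and cross product on R^3
    (the library norm on 'rV is the max-norm, so we define the Euclidean one). *)
Definition dot3 (a b : V3) : R := \sum_(i < 3) a 0 i * b 0 i.
Definition enorm3 (a : V3) : R := Num.sqrt (dot3 a a).
Definition mk3 (x y z : R) : V3 := \row_(k < 3) nth 0 [:: x; y; z] k.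
Definition cross3 (a b : V3) : V3 :=
  mk3 (a 0 1 * b 0 2 - a 0 2 * b 0 1)
      (a 0 2 * b 0 0 - a 0 0 * b 0 2)
      (a 0 0 * b 0 1 - a 0 1 * b 0 0).

Definition e_u : V2 := \row_(j < 2) (if j == 0 :> nat then 1 else 0).
Definition e_v : V2 := \row_(j < 2) (if j == 1 :> nat then 1 else 0).

Fixpoint iterD (vs : seq V2) (f : V2 -> V3) : V2 -> V3 :=
  match vs with
  | [::] => f
  | v :: vs' => 'D_v (iterD vs' f)
  end.

Definition smooth_near (f : V2 -> V3) (q : V2) : Prop :=
  forall vs : seq V2, \forall x \near q,
    {for x, continuous (iterD vs f)} /\ (forall v : V2, derivable (iterD vs f) x v).

Definition jacobian (f : V2 -> V3) (q : V2) : 'M[R]_(2, 3) :=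
  \matrix_(i < 2, k < 3) ('D_(if i == 0 :> nat then e_u else e_v) f q) 0 k.
Definition corank1 (f : V2 -> V3) (q : V2) : Prop := \rank (jacobian f q) = 1%N.

Definition df (f : V2 -> V3) (q : V2) (X : V2) : V3 := 'D_X f q.
Definition fu f q : V3 := 'D_e_u f q.
Definition fv f q : V3 := 'D_e_v f q.
Definition fuu f q : V3 := 'D_e_u ('D_e_u f) q.
Definition fuv f q : V3 := 'D_e_v ('D_e_u f) q.
Definition fvv f q : V3 := 'D_e_v ('D_e_v f) q.

Definition firstFF (f : V2 -> V3) (q : V2) (X Y : V2) : R := dot3 (df f q X) (df f q Y).

Definition tangentSp (f : V2 -> V3) (q : V2) : set V3 := range (df f q).
Definition normalSp (f : V2 -> V3) (q : V2) : set V3 :=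
  [set n | forall t, tangentSp f q t -> dot3 n t = 0].

Definition nproj (f : V2 -> V3) (q : V2) (w n : V3) : Prop :=
  normalSp f q n /\ tangentSp f q (w - n).

(** II(X,X) for X = a d/du + b d/dv, by symmetric bilinear extension of
    II(du,du)=f_uu^perp, II(du,dv)=f_uv^perp, II(dv,dv)=f_vv^perp *)
Definition secondFF_XX (f : V2 -> V3) (q : V2) (X : V2) (n : V3) : Prop :=
  exists n1 n2 n3, [/\ nproj f q (fuu f q) n1, nproj f q (fuv f q) n2,
    nproj f q (fvv f q) n3 &
    n = (X 0 0 ^+ 2) *: n1 + (2 * X 0 0 * X 0 1) *: n2 + (X 0 1 ^+ 2) *: n3].

Definition curvParabola (f : V2 -> V3) (q : V2) : set V3 :=
  [set n | exists X : V2, firstFF f q X X = 1 /\ secondFF_XX f q X n].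

(** a non-degenerate parabola in standard form: vertex c, orthonormal frame
    (e1,e2), equation y = k x^2 with k > 0; its axis of symmetry is c + R e2,
    and e2 points to its interior (convex side). *)
Definition parabolaSet (c e1 e2 : V3) (k : R) : set V3 :=
  [set c + t *: e1 + (k * t ^+ 2) *: e2 | t in [set: R]].
Definition is_nd_parabola (S : set V3) : Prop :=
  exists c e1 e2 (k : R), [/\ enorm3 e1 = 1, enorm3 e2 = 1, dot3 e1 e2 = 0, 0 < k &
    S = parabolaSet c e1 e2 k].

Definition halflineSet (c d : V3) : set V3 := [set c + s *: d | s in [set s : R | 0 <= s]].
Definition is_halfline (S : set V3) : Prop :=
  exists c d, d != 0 /\ S = halflineSet c d.

(** v is an axial vector of S: unit vector along the axis pointing to the
    interior (parabola case), or unit direction of extension (half-line case) *)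
Definition axial_cand (S : set V3) (v : V3) : Prop :=
  (exists c e1 (k : R), [/\ enorm3 e1 = 1, enorm3 v = 1, dot3 e1 v = 0, 0 < k &
      S = parabolaSet c e1 v k])
  \/ (exists c, enorm3 v = 1 /\ S = halflineSet c v).

Definition is_axial_vector (S : set V3) (v : V3) : Prop :=
  axial_cand S v /\ forall w, axial_cand S w -> w = v.

End Defs.

(* Main.v *)
Require Import Defs.
From HB Require Import structures.
From mathcomp Require Import all_boot all_order all_algebra.
From mathcomp Require Import all_classical all_reals all_analysis.
From mathcomp Require Import ring lra.
Import Order.TTheory GRing.Theory Num.Theory.
Import numFieldNormedType.Exports.
Local Open Scope classical_set_scope.
Local Open Scope ring_scope.

Section Alg.
Variable R : realType.
Implicit Types a b c x y u A B C : 'rV[R]_3.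

Lemma dot3E a b : dot3 a b = a 0 0 * b 0 0 + a 0 1 * b 0 1 + a 0 2 * b 0 2.
Proof.
rewrite /dot3 !big_ord_recr big_ord0 /= add0r.
by congr (_ * _ + _ * _ + _ * _); congr (_ _ _); apply: val_inj.
Qed.

Lemma dot3C a b : dot3 a b = dot3 b a.
Proof. rewrite !dot3E; ring. Qed.

Lemma dot3Dl a b c : dot3 (a + b) c = dot3 a c + dot3 b c.
Proof. rewrite !dot3E !mxE; ring. Qed.

Lemma dot3Bl a b c : dot3 (a - b) c = dot3 a c - dot3 b c.
Proof. rewrite !dot3E !mxE; ring. Qed.

Lemma dot3Zl (s : R) a c : dot3 (s *: a) c = s * dot3 a c.
Proof. rewrite !dot3E !mxE; ring. Qed.

Lemma dot3Dr a b c : dot3 c (a + b) = dot3 c a + dot3 c b.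
Proof. by rewrite dot3C dot3Dl !(dot3C c). Qed.

Lemma dot3Br a b c : dot3 c (a - b) = dot3 c a - dot3 c b.
Proof. by rewrite dot3C dot3Bl !(dot3C c). Qed.

Lemma dot3Zr (s : R) a c : dot3 c (s *: a) = s * dot3 c a.
Proof. by rewrite dot3C dot3Zl dot3C. Qed.

Lemma dot30l c : dot3 0 c = 0.
Proof. rewrite !dot3E !mxE; ring. Qed.

Lemma dot3_ge0 a : 0 <= dot3 a a.
Proof. rewrite dot3E; nra. Qed.

Lemma dot3_eq0 a : dot3 a a = 0 -> a = 0.
Proof.
rewrite dot3E => H; apply/rowP => i; rewrite mxE.
have h0 : a 0 0 = 0 by nra.
have h1 : a 0 1 = 0 by nra.
have h2 : a 0 2 = 0 by nra.
by case: i => [[|[|[|i]]] Hi] //=; rewrite ?(h0, h1, h2) //;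
  [ rewrite -h0 | rewrite -h1 | rewrite -h2]; congr (a 0 _); apply/val_inj.
Qed.

Lemma dot3_gt0 a : a != 0 -> 0 < dot3 a a.
Proof.
move=> an; rewrite lt_neqAle dot3_ge0 andbT eq_sym; apply/eqP => /dot3_eq0.
by move/eqP: an.
Qed.


Lemma qbb (a b c : R) : 0 < c -> exists m, forall t : R, m <= a + t * b + t ^+ 2 * c.
Proof.
move=> c0; exists (a - b ^+ 2 / (4 * c)) => t.
have e : a + t * b + t ^+ 2 * c - (a - b ^+ 2 / (4 * c)) = (2 * c * t + b) ^+ 2 / (4 * c).
  by field; apply/eqP; lra.
rewrite -subr_ge0 e; apply: divr_ge0; [exact: sqr_ge0 | lra].
Qed.

Lemma qnbb (a b c m : R) : c < 0 \/ (c = 0 /\ b != 0) ->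
  exists t : R, a + t * b + t ^+ 2 * c < m.
Proof.
case=> [c0|[-> b0]].
  set T := `|a| + `|b| + `|m| + 1.
  have T0 : 0 < T by rewrite /T; have := normr_ge0 a; have := normr_ge0 b;
    have := normr_ge0 m; lra.
  exists (T / (- c) + 1).
  set t := T / (- c) + 1.
  have t1 : 1 <= t by rewrite /t lerDr; apply: divr_ge0; lra.
  have gt : - c * t = T - c by rewrite /t mulrDr mulrC divfK ?mulr1 //; lra.
  have h1 : t * b <= `|b| * t by rewrite mulrC; apply: ler_wpM2r; [lra | exact: ler_norm].
  have h2 : t ^+ 2 * c <= - (T * t).
    have : 0 <= (- c * t - T) * t by apply: mulr_ge0; lra.
    rewrite expr2; nra.
  have ha : a <= `|a| := ler_norm a.
  have hm : - `|m| <= m by rewrite lerNl; rewrite -normrN; exact: ler_norm.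
  have : 0 <= (`|a| + `|m| + 1) * (t - 1) by apply: mulr_ge0; [|lra];
    have := normr_ge0 a; have := normr_ge0 m; lra.
  rewrite /T in h2 *; nra.
exists (- (`|a| + `|m| + 1) / b).
have -> : - (`|a| + `|m| + 1) / b * b = - (`|a| + `|m| + 1) by rewrite divfK.
have ha : a <= `|a| := ler_norm a.
have hm : - `|m| <= m by rewrite lerNl; rewrite -normrN; exact: ler_norm.
rewrite mulr0 addr0; lra.
Qed.

Definition PS (A B C : 'rV[R]_3) : set 'rV[R]_3 :=
  [set A + t *: B + (t ^+ 2) *: C | t in [set: R]].

Lemma dotPS u A B C t : dot3 u (A + t *: B + (t ^+ 2) *: C) =
  dot3 u A + t * dot3 u B + t ^+ 2 * dot3 u C.
Proof. by rewrite !dot3Dr !dot3Zr. Qed.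

Lemma PS_claim A B C (A' B' C' : 'rV[R]_3) u : PS A B C = PS A' B' C' -> 0 < dot3 u C' ->
  0 <= dot3 u C /\ (dot3 u C = 0 -> dot3 u B = 0).
Proof.
move=> E uC.
have [m Hm] := @qbb (dot3 u A') (dot3 u B') _ uC.
have Hb : forall t, m <= dot3 u A + t * dot3 u B + t ^+ 2 * dot3 u C.
  move=> t; rewrite -dotPS; have : PS A B C (A + t *: B + (t ^+ 2) *: C) by exists t.
  rewrite E => -[s _ <-]; rewrite dotPS; exact: Hm.
have nb : ~ (dot3 u C < 0 \/ (dot3 u C = 0 /\ dot3 u B != 0)).
  move=> /(@qnbb (dot3 u A) _ _ m) [t]; have := Hb t; lra.
split.
  by rewrite leNgt; apply/negP => h; apply: nb; left.
by move=> h; apply/eqP; rewrite -[_ == _]negbK; apply/negP => h'; apply: nb; right.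
Qed.

Lemma PS_geom A B C (A' B' C' : 'rV[R]_3) : PS A B C = PS A' B' C' -> C' != 0 -> dot3 C' B' = 0 ->
  exists g, 0 < g /\ C = g *: C'.
Proof.
move=> E C'0 CB'.
have ww := @dot3_gt0 C' C'0.
set g := dot3 C C' / dot3 C' C'.
set r := C - g *: C'.
have rC' : dot3 r C' = 0 by rewrite /r dot3Bl dot3Zl /g divfK // ?subrr // gt_eqF.
have rC : dot3 r C = dot3 r r.
  have -> : C = r + g *: C' by rewrite /r subrK.
  by rewrite dot3Dr dot3Zr rC' mulr0 addr0.
have r0 : r = 0.
  apply: dot3_eq0; apply/eqP; rewrite -[_ == _]negbK; apply/negP => rr.
  have rr0 : 0 < dot3 r r by rewrite lt_neqAle eq_sym rr dot3_ge0.
  set M := (`|dot3 C C'| + 1) / dot3 r r.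
  have := @PS_claim A B C A' B' C' (C' - M *: r) E.
  rewrite !dot3Bl !dot3Zl rC' mulr0 subr0 => /(_ ww) [+ _].
  rewrite rC (dot3C C') /M divfK ?gt_eqF //.
  have := ler_norm (dot3 C C'); lra.
have Cg : C = g *: C' by apply/eqP; rewrite -subr_eq0 -/r r0.
have [h1 h2] := @PS_claim A B C A' B' C' C' E ww.
have g0 : 0 <= g by rewrite /g; apply: divr_ge0; [rewrite dot3C; exact: h1 | exact: ltW].
case: (ltgtP 0 g) g0 => // [gp _ | g0' _]; first by exists g.
exfalso.
have CC : dot3 C' C = 0 by rewrite Cg -g0' scale0r dot3C dot30l.
have CB := h2 CC.
have cst : forall t, dot3 C' (A + t *: B + (t ^+ 2) *: C) = dot3 C' A.
  by move=> t; rewrite dotPS CB CC !mulr0 !addr0.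
have P0 : PS A' B' C' (A' + 0 *: B' + (0 ^+ 2) *: C') by exists 0.
have P1 : PS A' B' C' (A' + 1 *: B' + (1 ^+ 2) *: C') by exists 1.
rewrite -E in P0 P1.
case: P0 => t0 _ e0; case: P1 => t1 _ e1.
have := cst t0; have := cst t1; rewrite e0 e1 !dotPS CB' => h h'.
move: h h'; rewrite !expr0n /= ?expr1n; lra.
Qed.


Definition nv x := (enorm3 x)^-1 *: x.

Lemma enorm3Z (s : R) x : enorm3 (s *: x) = `|s| * enorm3 x.
Proof.
rewrite /enorm3 dot3Zl dot3Zr mulrA -expr2 sqrtrM ?sqr_ge0 //.
by rewrite sqrtr_sqr.
Qed.

Lemma enorm3_ge0 x : 0 <= enorm3 x.
Proof. exact: sqrtr_ge0. Qed.

Lemma enorm3_dot x : enorm3 x = 1 -> dot3 x x = 1.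
Proof.
move=> h; rewrite -(@sqr_sqrtr _ (dot3 x x)) ?dot3_ge0 //.
by rewrite -/(enorm3 x) h expr1n.
Qed.

Lemma enorm3_gt0 x : x != 0 -> 0 < enorm3 x.
Proof. by move=> x0; rewrite /enorm3 sqrtr_gt0; exact: dot3_gt0. Qed.

Lemma enorm3_neq0 x : enorm3 x = 1 -> x != 0.
Proof.
move=> h; apply/eqP => x0; move: h; rewrite x0 /enorm3 dot30l sqrtr0 => /eqP.
by rewrite eq_sym oner_eq0.
Qed.

Lemma nvZ (g : R) x : 0 < g -> nv (g *: x) = nv x.
Proof.
move=> g0; rewrite /nv enorm3Z gtr0_norm // scalerA invfM mulrAC mulVf ?gt_eqF //.
by rewrite mul1r.
Qed.

Lemma nv1 x : enorm3 x = 1 -> nv x = x.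
Proof. by move=> h; rewrite /nv h invr1 scale1r. Qed.

Lemma nv_norm x : x != 0 -> enorm3 (nv x) = 1.
Proof.
move=> x0; rewrite /nv enorm3Z ger0_norm ?invr_ge0 ?enorm3_ge0 // mulVf //.
by rewrite gt_eqF // enorm3_gt0.
Qed.

Lemma row3_eq a b : a 0 0 = b 0 0 -> a 0 1 = b 0 1 -> a 0 2 = b 0 2 -> a = b.
Proof.
move=> h0 h1 h2; apply/rowP => j.
case: j => [[|[|[|j]]] Hj] //.
- by rewrite (_ : Ordinal Hj = 0) //; apply: val_inj.
- by rewrite (_ : Ordinal Hj = 1) //; apply: val_inj.
- by rewrite (_ : Ordinal Hj = 2) //; apply: val_inj.
Qed.

Lemma cross_id x y : cross3 (cross3 x y) x = dot3 x x *: y - dot3 x y *: x.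
Proof. by apply: row3_eq; rewrite !mxE !dot3E /=; ring. Qed.

Lemma para_PS c e1 e2 k : parabolaSet c e1 e2 k = PS c e1 (k *: e2).
Proof.
rewrite /parabolaSet /PS; apply/seteqP; split => _ [t _ <-]; exists t => //;
  by rewrite scalerA mulrC.
Qed.

Lemma half_PS c d : halflineSet c d = PS c 0 d.
Proof.
rewrite /halflineSet /PS; apply/seteqP; split => _ [t t0 <-].
  exists (Num.sqrt t) => //; rewrite scaler0 addr0 sqr_sqrtr //.
exists (t ^+ 2); first by rewrite /= sqr_ge0.
by rewrite scaler0 addr0.
Qed.

Lemma half_scale c (g : R) w : 0 < g -> halflineSet c (g *: w) = halflineSet c w.
Proof.
move=> g0; rewrite /halflineSet; apply/seteqP; split => _ [s s0 <-].
  exists (s * g); first by rewrite /= mulr_ge0 // ltW.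
  by rewrite scalerA.
exists (s / g); first by rewrite /= divr_ge0 // ltW.
by rewrite scalerA divfK // gt_eqF.
Qed.

Lemma PS_nv A B C (A' B' C' : 'rV[R]_3) : PS A B C = PS A' B' C' -> C' != 0 ->
  dot3 C' B' = 0 -> nv C = nv C' /\ C != 0.
Proof.
move=> E C0 CB; have [g [g0 ->]] := @PS_geom A B C A' B' C' E C0 CB; split; first exact: nvZ.
apply/eqP => /eqP; rewrite scaler_eq0 (negbTE C0) orbF => /eqP g00.
by move: g0; rewrite g00 ltxx.
Qed.


Arguments nv1 {x}.
Arguments enorm3_neq0 {x}.
Arguments nv_norm {x}.
Arguments enorm3_gt0 {x}.

Lemma axialPS A B C : is_nd_parabola (PS A B C) \/ is_halfline (PS A B C) ->
  is_axial_vector (PS A B C) (nv C).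
Proof.
have key := @PS_nv A B C.
have dz : forall (k : R) a b, dot3 b a = 0 -> dot3 (k *: a) b = 0.
  by move=> k a b h; rewrite dot3Zl dot3C h mulr0.
have d0z : forall a, dot3 a 0 = 0 by move=> a; rewrite dot3C dot30l.
case=> [[c [e1 [e2 [k [n1 n2 d12 k0 E]]]]] | [c [d [d0 E]]]].
  have E' := E; rewrite para_PS in E'.
  have ke0 : k *: e2 != 0 by rewrite scaler_eq0 negb_or gt_eqF // enorm3_neq0.
  have [hC _] := key _ _ _ E' ke0 (dz _ _ _ d12).
  rewrite nvZ // (nv1 n2) in hC.
  split; first by left; exists c, e1, k; rewrite hC.
  move=> w [[c' [e1' [k' [n1' nw d' k0' Ew]]]] | [c' [nw Ew]]].
    rewrite [X in _ = X]para_PS in Ew.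
    have kw0 : k' *: w != 0 by rewrite scaler_eq0 negb_or gt_eqF // enorm3_neq0.
    have [h' _] := key _ _ _ Ew kw0 (dz _ _ _ d').
    by rewrite nvZ // (nv1 nw) in h'; rewrite h'.
  rewrite [X in _ = X]half_PS in Ew.
  have [h' _] := key _ _ _ Ew (enorm3_neq0 nw) (d0z _).
  by rewrite (nv1 nw) in h'; rewrite h'.
have E' := E; rewrite half_PS in E'.
have [hC _] := key _ _ _ E' d0 (d0z _).
split.
  right; exists c; split; first by rewrite hC; exact: nv_norm.
  by rewrite E hC /nv half_scale // invr_gt0 enorm3_gt0.
move=> w [[c' [e1' [k' [n1' nw d' k0' Ew]]]] | [c' [nw Ew]]].
  rewrite [X in _ = X]para_PS in Ew.
  have kw0 : k' *: w != 0 by rewrite scaler_eq0 negb_or gt_eqF // enorm3_neq0.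
  have [h' _] := key _ _ _ Ew kw0 (dz _ _ _ d').
  by rewrite nvZ // (nv1 nw) in h'; rewrite h'.
rewrite [X in _ = X]half_PS in Ew.
have [h' _] := key _ _ _ Ew (enorm3_neq0 nw) (d0z _).
by rewrite (nv1 nw) in h'; rewrite h'.
Qed.

End Alg.
Arguments PS {R}.
Arguments nv {R}.
Arguments axialPS {R A B C}.

Section Curv.
Variable R : realType.
Variable f : 'rV[R]_2 -> 'rV[R]_3.
Variable q : 'rV[R]_2.
Hypothesis Hdf : forall X, 'D_X f q = X 0 0 *: fu f q.
Hypothesis u0 : fu f q != 0.

Local Notation u := (fu f q).

Definition mkX (a b : R) : 'rV[R]_2 := \row_(j < 2) nth 0 [:: a; b] j.
Lemma mkX0 a b : mkX a b 0 0 = a. Proof. by rewrite mxE. Qed.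
Lemma mkX1 a b : mkX a b 0 1 = b. Proof. by rewrite mxE. Qed.

Definition projN (w : 'rV[R]_3) := w - (dot3 w u / dot3 u u) *: u.

Lemma uu0 : 0 < dot3 u u. Proof. exact: dot3_gt0. Qed.

Lemma tangentP t : tangentSp f q t <-> exists s, t = s *: u.
Proof.
split; first by move=> [X _ <-]; exists (X 0 0); rewrite /df Hdf.
by move=> [s ->]; exists (mkX s 0) => //; rewrite /df Hdf mkX0.
Qed.

Lemma normalP n : normalSp f q n <-> dot3 n u = 0.
Proof.
split; first by move=> h; apply: h; apply/tangentP; exists 1; rewrite scale1r.
by move=> h t /tangentP [s ->]; rewrite dot3Zr h mulr0.
Qed.

Lemma nproj_iff w n : nproj f q w n <-> n = projN w.
Proof.
split.
  move=> [/normalP Nn /tangentP [s es]].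
  have en : n = w - s *: u by rewrite -es opprB addrC subrK.
  move: Nn; rewrite en dot3Bl dot3Zl => /eqP; rewrite subr_eq0 => /eqP ws.
  by rewrite /projN ws mulfK // gt_eqF // uu0.
move=> ->; split.
  by apply/normalP; rewrite /projN dot3Bl dot3Zl divfK ?subrr // gt_eqF // uu0.
by apply/tangentP; exists (dot3 w u / dot3 u u); rewrite /projN opprB addrC subrK.
Qed.

Local Notation P1 := (projN (fuu f q)).
Local Notation P2 := (projN (fuv f q)).
Local Notation P3 := (projN (fvv f q)).

Lemma secondP X n : secondFF_XX f q X n <->
  n = (X 0 0 ^+ 2) *: P1 + (2 * X 0 0 * X 0 1) *: P2 + (X 0 1 ^+ 2) *: P3.
Proof.
split.
  by move=> [n1 [n2 [n3 [/nproj_iff -> /nproj_iff -> /nproj_iff -> ->]]]].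
move=> ->; exists P1, P2, P3; split => //; exact/nproj_iff.
Qed.

Lemma firstE X : firstFF f q X X = X 0 0 ^+ 2 * dot3 u u.
Proof. by rewrite /firstFF /df Hdf dot3Zl dot3Zr mulrA -expr2. Qed.

Definition rho := (enorm3 u)^-1.

Lemma rho2 : rho ^+ 2 * dot3 u u = 1.
Proof.
rewrite /rho /enorm3 exprVn sqr_sqrtr ?dot3_ge0 // mulVf // gt_eqF //.
exact: uu0.
Qed.

Lemma curvE : curvParabola f q = PS (rho ^+ 2 *: P1) ((2 * rho) *: P2) P3.
Proof.
apply/seteqP; split.
  move=> n [X [h1 /secondP ->]].
  move: h1; rewrite firstE => h1.
  have : X 0 0 ^+ 2 = rho ^+ 2.
    apply: (@mulIf _ (dot3 u u)); first by rewrite gt_eqF // uu0.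
    by rewrite h1 rho2.
  move/eqP; rewrite eqf_sqr => /orP [] /eqP ->.
    exists (X 0 1) => //; rewrite !scalerA; congr (_ + _ + _); congr (_ *: _); ring.
  exists (- X 0 1) => //; rewrite !scalerA; congr (_ + _ + _); congr (_ *: _); ring.
move=> _ [t _ <-]; exists (mkX rho t); rewrite firstE mkX0 rho2; split => //.
apply/secondP; rewrite mkX0 mkX1 !scalerA; congr (_ + _ + _); congr (_ *: _); ring.
Qed.

End Curv.
Arguments projN {R} f q w.
Arguments curvE {R f q}.
Arguments uu0 {R f q}.

Section An.
Variable R : realType.

Lemma mxcomp_le n (M : 'rV[R]_n) k : `|M 0 k| <= `|M|.
Proof.
change (`|M 0 k| <= mx_norm M); rewrite mx_normrE.
exact: (le_bigmax _ (fun ij : 'I_1 * 'I_n => `|M ij.1 ij.2|) (0, k)).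
Qed.

Lemma mxnorm_le n (M : 'rV[R]_n) e : 0 <= e -> (forall k, `|M 0 k| <= e) -> `|M| <= e.
Proof.
move=> e0 H; change (mx_norm M <= e); rewrite mx_normrE.
apply: bigmax_le => // -[i j] _ /=.
by have -> : i = 0 by apply/val_inj; case: i => [[]].
Qed.

Lemma line_der (f : 'rV[R]_2 -> 'rV[R]_3) (y v : 'rV[R]_2) (k : 'I_3) (t : R) :
  derivable f (t *: v + y) v ->
  derivable (fun s : R => f (s *: v + y) 0 k) t 1 /\
  'D_1 (fun s : R => f (s *: v + y) 0 k) t = 'D_v f (t *: v + y) 0 k.
Proof.
set x := t *: v + y => df.
have E : (fun h : R => h^-1 *: (((fun s : R => f (s *: v + y) 0 k) \o shift t) (h *: 1)
      - f (t *: v + y) 0 k)) =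
    (fun h : R => (h^-1 *: ((f \o shift x) (h *: v) - f x)) 0 k).
  apply/funext => h /=; rewrite !mxE.
  congr (_ * (f _ 0 k - _)).
  by rewrite /x addrA -scalerDl; congr (_ *: _ + _); rewrite /GRing.scale /= mulr1.
have C : (fun h : R => (h^-1 *: ((f \o shift x) (h *: v) - f x)) 0 k) @ 0^' -->
    'D_v f x 0 k.
  have cc := @coord_continuous R 1 3 0 k ('D_v f x).
  have df' : (fun h : R => h^-1 *: ((f \o shift x) (h *: v) - f x)) @ 0^' --> 'D_v f x.
    exact: df.
  exact: (@cvg_comp _ _ _ (fun h : R => h^-1 *: ((f \o shift x) (h *: v) - f x)) (fun M : 'rV[R]_3 => M 0 k) _ _ _ df' cc).
split; first by rewrite /derivable E; apply/cvg_ex; exists ('D_v f x 0 k).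
by rewrite /derive E; apply: cvg_lim.
Qed.

Lemma MVT2 (phi : R -> R) (s : R) :
  (forall t, `|t| <= `|s| -> derivable phi t 1) ->
  exists c, `|c| <= `|s| /\ phi s - phi 0 = 'D_1 phi c * s.
Proof.
move=> H.
have cont : forall t, `|t| <= `|s| -> {for t, continuous phi}.
  move=> t /H /derivable1_diffP dt; exact: differentiable_continuous.
have [s0|s0] := leP 0 s.
  have := @MVT_segment R phi (fun x => 'D_1 phi x) 0 s s0.
  case.
  - move=> x; rewrite in_itv /= => /andP [x0 xs]; apply: derivableP; apply: H.
    by rewrite (ger0_norm s0) ler_norml; apply/andP; split; lra.
  - apply: continuous_in_subspaceT => x; rewrite inE /= in_itv /= => /andP [x0 xs].
    by apply: cont; rewrite (ger0_norm s0) ler_norml; apply/andP; split; lra.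
  move=> c; rewrite in_itv /= => /andP [c0 cs] e; exists c; split.
    by rewrite (ger0_norm s0) ler_norml; apply/andP; split; lra.
  by rewrite e subr0.
have := @MVT_segment R phi (fun x => 'D_1 phi x) s 0 (ltW s0).
case.
- move=> x; rewrite in_itv /= => /andP [sx x0]; apply: derivableP; apply: H.
  by rewrite (ltr0_norm s0) ler_norml; apply/andP; split; lra.
- apply: continuous_in_subspaceT => x; rewrite inE /= in_itv /= => /andP [sx x0].
  by apply: cont; rewrite (ltr0_norm s0) ler_norml; apply/andP; split; lra.
move=> c; rewrite in_itv /= => /andP [sc c0] e; exists c; split.
  by rewrite (ltr0_norm s0) ler_norml; apply/andP; split; lra.
have : phi 0 - phi s = 'D_1 phi c * (0 - s) by [].
move=> e'; rewrite -[phi s - phi 0]opprB e' sub0r mulrN opprK //.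
Qed.

Lemma row2_eq (a b : 'rV[R]_2) : a 0 0 = b 0 0 -> a 0 1 = b 0 1 -> a = b.
Proof.
move=> h0 h1; apply/rowP => j.
case: j => [[|[|j]] Hj] //.
- by rewrite (_ : Ordinal Hj = 0) //; apply: val_inj.
- by rewrite (_ : Ordinal Hj = 1) //; apply: val_inj.
Qed.

Lemma comp_expand (a b hh : R) (u v F G : 'rV[R]_3) k :
  (a *: u + b *: v - hh *: (F - G)) 0 k = a * u 0 k + b * v 0 k - hh * (F 0 k - G 0 k).
Proof. by rewrite !mxE. Qed.

Lemma alg1 (a b x y Q D : R) : a * x + b * y - (b * D + a * Q) = a * (x - Q) + b * (y - D).
Proof. by ring. Qed.

Lemma Dlin (f : 'rV[R]_2 -> 'rV[R]_3) (q : 'rV[R]_2) :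
  smooth_near f q -> forall X, 'D_X f q = X 0 0 *: fu f q + X 0 1 *: fv f q.
Proof.
move=> Hs X.
have /nbhs_normP [d0 d0p H0] := Hs [::].
have H0' : forall x, `|q - x| < d0 -> forall v, derivable f x v.
  by move=> x hx v; have [] := H0 x hx.
have Hc : {for q, continuous ('D_(e_v R) f)}.
  by have [] := nbhs_singleton (Hs [:: e_v R]).
have Hu : derivable f q (e_u R) by apply: H0'; rewrite subrr normr0.
set a := X 0 0; set b := X 0 1.
have eX : X = a *: e_u R + b *: e_v R by apply: row2_eq; rewrite !mxE /= ?mulr1 ?mulr0 ?addr0 ?add0r.
rewrite /derive; apply: cvg_lim; first exact: norm_hausdorff.
apply/cvgrPdist_le => eps eps0.
set K := `|a| + `|b| + 1.
have K0 : 0 < K by rewrite /K; have := normr_ge0 a; have := normr_ge0 b; lra.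
set e1 := eps / (2 * K).
have e1p : 0 < e1 by rewrite /e1 divr_gt0 // mulr_gt0.
have /cvgrPdist_lt /(_ e1 e1p) /nbhs_normP [d1 d1p H1] := Hc.
have Hu' : (fun h : R => h^-1 *: ((f \o shift q) (h *: e_u R) - f q)) @ 0^' --> fu f q.
  exact: Hu.
have /cvgrPdist_lt /(_ e1 e1p) := Hu'.
rewrite near_withinE => /nbhs_normP [d2 d2p H2].
rewrite near_withinE; apply/nbhs_normP.
exists (Num.min d0 (Num.min d1 d2) / K).
  by rewrite /= divr_gt0 // !lt_min d0p d1p d2p.
move=> h /= hd hn.
have hK : `|h| * K < Num.min d0 (Num.min d1 d2).
  by rewrite -ltr_pdivlMr // -normrN -(sub0r h).
move: hK; rewrite !lt_min => /andP [hm0 /andP [hm1 hm2]].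
have ha0 := normr_ge0 a; have hb0 := normr_ge0 b; have hh0 := normr_ge0 h.
have hKab : `|h| * (`|a| + `|b|) <= `|h| * K.
  by apply: ler_wpM2l => //; rewrite /K; lra.
apply: mxnorm_le; first exact: ltW.
move=> k.
set y := (h * a) *: e_u R + q.
have ehX : h *: X + q = (h * b) *: e_v R + y.
  rewrite /y eX scalerDr !scalerA addrA; congr (_ + _); exact: addrC.
set phi := fun s : R => f (s *: e_v R + y) 0 k.
have neu : `|e_u R| <= 1.
  apply: mxnorm_le => // j; rewrite mxE; case: ifP => _; rewrite ?normr1 ?normr0 //.
have nev : `|e_v R| <= 1.
  apply: mxnorm_le => // j; rewrite mxE; case: ifP => _; rewrite ?normr1 ?normr0 //.
have dist : forall t, `|t| <= `|h * b| -> `|q - (t *: e_v R + y)| <= `|h| * (`|a| + `|b|).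
  move=> t ht; rewrite /y addrA opprD addrCA subrr addr0 normrN.
  apply: (le_trans (ler_normD _ _)); rewrite !normrZ.
  have h1 : `|t| * `|e_v R| <= `|t| by rewrite -[X in _ <= X]mulr1; apply: ler_wpM2l.
  have h2 : `|h * a| * `|e_u R| <= `|h * a| by rewrite -[X in _ <= X]mulr1; apply: ler_wpM2l.
  move: ht; rewrite !normrM => ht.
  rewrite normrM in h2; nra.
have der : forall t, `|t| <= `|h * b| -> derivable phi t 1.
  move=> t ht.
  have hlt : `|q - (t *: e_v R + y)| < d0.
    by apply: (le_lt_trans (dist t ht)); apply: le_lt_trans hKab hm0.
  exact: (@line_der f y (e_v R) k t (H0' _ hlt (e_v R))).1.
have [c [cb ec]] := @MVT2 phi (h * b) der.
have [dc0 dc1] : `|q - (c *: e_v R + y)| < d0 /\ `|q - (c *: e_v R + y)| < d1.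
  by split; apply: (le_lt_trans (dist c cb)); apply: le_lt_trans hKab _.
rewrite (@line_der f y (e_v R) k c (H0' _ dc0 (e_v R))).2 in ec.
set D := 'D_(e_v R) f (c *: e_v R + y) 0 k in ec.
have Hfv : `|fv f q 0 k - D| < e1.
  apply: le_lt_trans (H1 _ dc1).
  have := @mxcomp_le 3 ('D_(e_v R) f q - 'D_(e_v R) f (c *: e_v R + y)) k.
  by rewrite !mxE.
have [Qu [HQu eQu]] : exists Qu, `|fu f q 0 k - Qu| < e1 /\
    h^-1 * (f y 0 k - f q 0 k) = a * Qu.
  have [a0|a0] := eqVneq a 0.
    exists (fu f q 0 k); rewrite subrr normr0; split => //.
    by rewrite /y a0 mulr0 scale0r add0r subrr mulr0 mul0r.
  have ra : h * a != 0 by rewrite mulf_neq0.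
  have := H2 (h * a).
  have hr : `|0 - h * a| < d2.
    rewrite sub0r normrN; apply: le_lt_trans hm2; rewrite normrM.
    by apply: ler_wpM2l => //; rewrite /K; lra.
  move=> /(_ hr ra) /= Hr.
  exists ((h * a)^-1 * (f y 0 k - f q 0 k)); split.
    apply: le_lt_trans Hr.
    have := @mxcomp_le 3 (fu f q - (h * a)^-1 *: (f ((h * a) *: e_u R + q) - f q)) k.
    by rewrite !mxE.
  by field; apply/andP.
rewrite comp_expand ehX.
have e0 : f y 0 k = phi 0 by rewrite /phi scale0r add0r.
have eq1 : h^-1 * (phi (h * b) - f q 0 k) = b * D + a * Qu.
  have -> : phi (h * b) - f q 0 k = (phi (h * b) - phi 0) + (phi 0 - f q 0 k) by ring.
  rewrite mulrDr ec -e0 eQu.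
  by congr (_ + _); field.
rewrite -/(phi (h * b)) eq1.
rewrite alg1.
apply: (le_trans (ler_normD _ _)); rewrite !normrM.
have b1 : `|a| * `|fu f q 0 k - Qu| <= `|a| * e1 by apply: ler_wpM2l => //; exact: ltW.
have b2 : `|b| * `|fv f q 0 k - D| <= `|b| * e1 by apply: ler_wpM2l => //; exact: ltW.
have KO : K != 0 by rewrite gt_eqF.
have Ke : K * e1 = eps / 2.
  by rewrite /e1; field.
rewrite /K !mulrDl mul1r in Ke.
lra.
Qed.

End An.

Theorem mainTheorem6 (R : realType) (f : 'rV[R]_2 -> 'rV[R]_3) (q : 'rV[R]_2) :
  smooth_near f q ->
  corank1 f q ->
  is_nd_parabola (curvParabola f q) \/ is_halfline (curvParabola f q) ->
  fu f q != 0 -> fv f q = 0 ->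
  is_axial_vector (curvParabola f q)
    ((enorm3 (cross3 (cross3 (fu f q) (fvv f q)) (fu f q)))^-1 *:
       cross3 (cross3 (fu f q) (fvv f q)) (fu f q))
  /\ (enorm3 (fu f q) = 1 -> enorm3 (fvv f q) = 1 -> dot3 (fu f q) (fvv f q) = 0 ->
      is_axial_vector (curvParabola f q) (fvv f q)).
Proof.
move=> Hs _ Hsh u0 fv0.
have Hdf X : 'D_X f q = X 0 0 *: fu f q by rewrite Dlin // fv0 scaler0 addr0.
rewrite (curvE Hdf u0) in Hsh *.
have ax := axialPS Hsh.
have eX : cross3 (cross3 (fu f q) (fvv f q)) (fu f q) =
    dot3 (fu f q) (fu f q) *: projN f q (fvv f q).
  rewrite cross_id /projN scalerBr scalerA.
  congr (_ - _ *: _).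
  have uu := uu0 u0.
  rewrite [dot3 (fvv f q) _]dot3C.
  by rewrite mulrC divfK // gt_eqF.
have e1 : (enorm3 (cross3 (cross3 (fu f q) (fvv f q)) (fu f q)))^-1 *:
       cross3 (cross3 (fu f q) (fvv f q)) (fu f q) = nv (projN f q (fvv f q)).
  by rewrite -/(nv _) eX nvZ // uu0.
rewrite e1; split => // n1 n2 d12.
suff h : nv (projN f q (fvv f q)) = fvv f q by move: ax; rewrite h.
rewrite -e1 cross_id d12 scale0r subr0 (enorm3_dot _ _ n1) scale1r.
by rewrite n2 invr1 scale1r.
Qed.
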